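(* Let $1\leq r\leq n$, give the variables $x_1,\dots,x_n$ of $\mathbb{C}^n$ the weights $(w_1,\dots,w_r,0,\dots,0)$ with $w_1,\dots,w_r>0$, and let $f\in \mathbb{C}\{x_{r+1},\dots,x_n\}[x_1,\dots,x_r]$ be a quasihomogeneous polynomial of strictly positive weight $\mathrm{wt}(f)>0$. Then for every integer $p>0$ and every non-zero quasihomogeneous logarithmic $p$-form $\omega$ (logarithmic with respect to $f$), one has $\mathrm{wt}(\omega)>-\mathrm{wt}(f)$.
   Context: Weights: an element $g\in \mathbb{C}\{x_{r+1},\dots,x_n\}[x_1,\dots,x_r]$ is quasihomogeneous of weight $d$ if it is a sum of terms $c(x_{r+1},\dots,x_n)\,x_1^{a_1}\cdots x_r^{a_r}$ with $\sum_{i=1}^r a_iw_i=d$; the variables $x_{r+1},\dots,x_n$ have weight $0$. We set $\mathrm{wt}(dx_i)=w_i$ for $i\le r$ and $\mathrm{wt}(dx_i)=0$ for $i>r$; a holomorphic $p$-form $\sum_I g_I\,dx_{i_1}\wedge\cdots\wedge dx_{i_p}$ is quasihomogeneous of weight $d$ if each $g_I$ is quasihomogeneous and $\mathrm{wt}(g_I)+\sum_{k}\mathrm{wt}(dx_{i_k})=d$ for all nonzero terms. A germ at $0$ of meromorphic $p$-form $\omega$ is logarithmic (with respect to $f$) if $f\omega$ and $f\,d\omega$ are holomorphic; it is quasihomogeneous if the holomorphic form $f\omega$ is quasihomogeneous, and then $\mathrm{wt}(\omega):=\mathrm{wt}(f\omega)-\mathrm{wt}(f)$. *)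

(* Defs.v *)
From HB Require Import structures.
From mathcomp Require Import all_boot all_order all_algebra.
From mathcomp Require Import reals complex.
Set Implicit Arguments. Unset Strict Implicit. Unset Printing Implicit Defensive.
Import Order.TTheory GRing.Theory Num.Theory.
Local Open Scope ring_scope.

(* Multi-indices on the variables x_1..x_n (indexed by 'I_n, x_{i+1} <-> i). *)
Definition midx (n : nat) := {ffun 'I_n -> nat}.
Definition mdeg n (a : midx n) : nat := (\sum_i a i)%N.

Definition series (R : realType) (n : nat) := midx n -> R[i].

(* Convergent power series = germs at 0 of holomorphic functions:
   coefficients satisfy a geometric bound |a_alpha| <= M rho^|alpha|. *)
Definition holo (R : realType) n (a : series R n) : Prop :=
  exists (M rho : R), 0 < rho /\
    forall al : midx n, `|a al| <= ((M * rho ^+ mdeg al)%:C)%C.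

Definition nonzero_series (R : realType) n (a : series R n) : Prop :=
  exists al, a al != 0.

Definition smul (R : realType) n (a b : series R n) : series R n :=
  fun g => \sum_(al : {ffun 'I_n -> 'I_(mdeg g).+1} | [forall i, (al i <= g i)%N])
     a [ffun i => nat_of_ord (al i)] * b [ffun i => (g i - al i)%N].

Definition sderiv (R : realType) n (j : 'I_n) (a : series R n) : series R n :=
  fun al => (al j).+1%:R * a [ffun i => if i == j then (al i).+1 else al i].

(* f lies in C{x_{r+1},...,x_n}[x_1,...,x_r]: bounded degree in x_1..x_r. *)
Definition poly_first (R : realType) n (r : nat) (a : series R n) : Prop :=
  exists N : nat, forall al : midx n, a al != 0 ->
    forall i : 'I_n, (i < r)%N -> (al i <= N)%N.

Definition mwt (R : realType) n (w : 'I_n -> R) (al : midx n) : R :=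
  \sum_i (al i)%:R * w i.

Definition quasihom (R : realType) n (w : 'I_n -> R) (a : series R n) (d : R) : Prop :=
  forall al, a al != 0 -> mwt w al = d.

(* Forms: the coefficient of dx_I (I increasing set of indices). *)
Definition cform (R : realType) n := {set 'I_n} -> series R n.

Definition holo_form (R : realType) n (p : nat) (th : cform R n) : Prop :=
  (forall I, holo (th I)) /\ (forall I al, th I al != 0 -> #|I| = p).

Definition nonzero_form (R : realType) n (th : cform R n) : Prop :=
  exists I al, th I al != 0.

Definition quasihom_form (R : realType) n (w : 'I_n -> R) (th : cform R n) (d : R) : Prop :=
  forall I al, th I al != 0 -> mwt w al + \sum_(i in I) w i = d.

Definition fmul (R : realType) n (a : series R n) (th : cform R n) : cform R n :=
  fun I => smul a (th I).

Definition fsub (R : realType) n (th th' : cform R n) : cform R n :=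
  fun I al => th I al - th' I al.

(* sign of dx_j /\ dx_{J \ j} = sign * dx_J *)
Definition wsign (R : realType) n (J : {set 'I_n}) (j : 'I_n) : R[i] :=
  (-1) ^+ #|[set i in J | (i < j)%N]|.

Definition dform (R : realType) n (th : cform R n) : cform R n :=
  fun J al => \sum_(j in J) wsign R J j * sderiv j (th (J :\ j)) al.

Definition dwedge (R : realType) n (a : series R n) (th : cform R n) : cform R n :=
  fun J al => \sum_(j in J) wsign R J j * smul (sderiv j a) (th (J :\ j)) al.

(* A meromorphic p-form omega is represented as eta / g with eta a holomorphic
   p-form and g a nonzero holomorphic germ.
   d(eta/g) = (g d eta - dg /\ eta) / g^2.
   omega is logarithmic w.r.t. f iff f*omega and f*d omega are holomorphic. *)
Definition logarithmic (R : realType) n (f : series R n) (p : nat)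
    (eta : cform R n) (g : series R n) : Prop :=
  (exists th : cform R n, holo_form p th /\ fmul f eta = fmul g th) /\
  (exists xi : cform R n, holo_form p.+1 xi /\
     fmul f (fsub (fmul g (dform eta)) (dwedge g eta)) = fmul (smul g g) xi).

(* Main.v *)
Require Import Defs.
From HB Require Import structures.
From mathcomp Require Import all_boot all_order all_algebra.
From mathcomp Require Import reals complex.
From mathcomp Require Import zify ring lra.
From Stdlib Require Import Classical FunctionalExtensionality.
Set Implicit Arguments. Unset Strict Implicit. Unset Printing Implicit Defensive.
Import Order.TTheory GRing.Theory Num.Theory.
Local Open Scope ring_scope.

Section Comb.
Variable n : nat.
Implicit Types (g al be ga de : midx n).

Definition mle ga g : bool := [forall i, (ga i <= g i)%N].
Definition madd ga de : midx n := [ffun i => (ga i + de i)%N].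
Definition msub g ga : midx n := [ffun i => (g i - ga i)%N].
Definition toM M (c : {ffun 'I_n -> 'I_M.+1}) : midx n := [ffun i => nat_of_ord (c i)].
Definition U (M : nat) : seq (midx n) := map (@toM M) (enum {ffun 'I_n -> 'I_M.+1}).
Definition Box g := [seq ga <- U (mdeg g) | mle ga g].

Lemma mleP ga g : reflect (forall i, (ga i <= g i)%N) (mle ga g).
Proof. exact: forallP. Qed.

Lemma le_mdeg g i : (g i <= mdeg g)%N.
Proof. by rewrite /mdeg (bigD1 i) //= leq_addr. Qed.

Lemma mem_U M ga : (ga \in U M) = [forall i, (ga i <= M)%N].
Proof.
apply/mapP/forallP => [[c _ ->] i|H].
  by rewrite ffunE -ltnS ltn_ord.
exists [ffun i => (inord (ga i) : 'I_M.+1)]; first by rewrite mem_enum.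
by apply/ffunP => i; rewrite !ffunE inordK // ltnS.
Qed.

Lemma uniq_U M : uniq (U M).
Proof.
rewrite map_inj_uniq ?enum_uniq // => c c' /ffunP H.
apply/ffunP => i; apply: val_inj; by have := H i; rewrite !ffunE.
Qed.

Lemma mem_Box g ga : (ga \in Box g) = mle ga g.
Proof.
rewrite mem_filter mem_U; apply/andP/idP => [[]//|H]; split => //.
by apply/forallP => i; apply: leq_trans (le_mdeg g i); move/mleP: H.
Qed.

Lemma uniq_Box g : uniq (Box g).
Proof. exact/filter_uniq/uniq_U. Qed.

Lemma sum_mem (V : nmodType) (s1 s2 : seq (midx n)) (F : midx n -> V) :
  uniq s1 -> uniq s2 -> s1 =i s2 -> \sum_(x <- s1) F x = \sum_(x <- s2) F x.
Proof. by move=> u1 u2 e; apply/perm_big/uniq_perm. Qed.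

Lemma sum_box (V : nmodType) (s : seq (midx n)) g (F : midx n -> V) :
  uniq s -> (forall x, (x \in s) = mle x g) ->
  \sum_(x <- s) F x = \sum_(x <- Box g) F x.
Proof.
move=> us H; apply: sum_mem => //; first exact: uniq_Box.
by move=> x; rewrite H mem_Box.
Qed.

End Comb.

Section Ser.
Variables (R : realType) (n : nat).
Implicit Types (a b c : series R n) (g al be ga de x y z : midx n).

Lemma smulE a b g : smul a b g = \sum_(ga <- Box g) a ga * b (msub g ga).
Proof.
rewrite /smul /Box big_filter /U big_map big_enum_cond /=.
apply: eq_big => [c|c _].
  by apply: eq_forallb => i; rewrite ffunE.
congr (_ * _); congr b; apply/ffunP => i; by rewrite !ffunE.
Qed.


Lemma msubK g ga : mle ga g -> msub g (msub g ga) = ga.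
Proof. move/mleP=> H; apply/ffunP => i; rewrite !ffunE; have := H i; move: (ga i) (g i) => x y. lia. Qed.

Lemma mle_msub g ga : mle (msub g ga) g.
Proof. apply/mleP => i; rewrite ffunE; lia. Qed.

Lemma smulC a b : smul a b = smul b a.
Proof.
apply: functional_extensionality => g; rewrite !smulE.
rewrite -(sum_box (s := map (msub g) (Box g))); last first.
- move=> x; apply/mapP/idP => [[y _ ->]|H]; first exact: mle_msub.
  by exists (msub g x); rewrite ?mem_Box ?mle_msub // msubK.
- rewrite map_inj_in_uniq ?uniq_Box // => x y; rewrite !mem_Box => hx hy E.
  by rewrite -(msubK hx) -(msubK hy) E.
rewrite big_map big_seq [RHS]big_seq; apply: eq_bigr => x; rewrite mem_Box => hx.
by rewrite msubK // mulrC.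
Qed.


Lemma mle_trans x y z : mle x y -> mle y z -> mle x z.
Proof. move=> /mleP h1 /mleP h2; apply/mleP => i; exact: leq_trans (h1 i) (h2 i). Qed.

Lemma sum_sub_box (V : nmodType) g de (F : midx n -> V) : mle de g ->
  \sum_(x <- Box de) F x = \sum_(x <- Box g | mle x de) F x.
Proof.
move=> hd; rewrite -[RHS]big_filter; symmetry; apply: sum_box.
  exact/filter_uniq/uniq_Box.
by move=> x; rewrite mem_filter mem_Box; apply/andP/idP => [[]//|h]; split => //; exact: mle_trans hd.
Qed.

Lemma sum_shift_box (V : nmodType) g ga (F : midx n -> V) : mle ga g ->
  \sum_(x <- Box (msub g ga)) F x = \sum_(x <- Box g | mle ga x) F (msub x ga).
Proof.
move=> hg; rewrite -[RHS]big_filter -[RHS](big_map (fun x => msub x ga) xpredT); symmetry; apply: sum_box.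
  rewrite map_inj_in_uniq; first exact/filter_uniq/uniq_Box.
  move=> x y; rewrite !mem_filter => /andP[/mleP h1 _] /andP[/mleP h2 _] /ffunP E.
  apply/ffunP => i; have := E i; rewrite !ffunE; have := h1 i; have := h2 i.
  move: (x i) (y i) (ga i) => u v w; lia.
move=> x; apply/mapP/idP => [[y]|h].
  rewrite mem_filter mem_Box => /andP[/mleP h1 /mleP h2] ->; apply/mleP => i.
  rewrite !ffunE; have := h1 i; have := h2 i; move: (y i) (g i) (ga i) => u v w; lia.
exists (madd x ga).
  rewrite mem_filter mem_Box; move/mleP: h => h; move/mleP: hg => hg.
  apply/andP; split; apply/mleP => i; rewrite !ffunE; have := h i; have := hg i;
  rewrite !ffunE; move: (x i) (g i) (ga i) => u v w; lia.
apply/ffunP => i; rewrite !ffunE; move: (x i) (ga i) => u v; lia.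
Qed.

Lemma smulA a b c : smul a (smul b c) = smul (smul a b) c.
Proof.
apply: functional_extensionality => g; rewrite !smulE.
transitivity (\sum_(ga <- Box g) \sum_(de <- Box g)
   (if mle ga de then a ga * (b (msub de ga) * c (msub g de)) else 0)).
  rewrite big_seq [RHS]big_seq; apply: eq_bigr => ga; rewrite mem_Box => hg.
  rewrite smulE (sum_shift_box _ hg) big_distrr big_mkcond /=; apply: eq_bigr => de _.
  case: ifP => // hd; congr (_ * (_ * c _)); apply/ffunP => i; rewrite !ffunE.
  move/mleP: hg => hg; move/mleP: hd => hd; have := hg i; have := hd i.
  move: (g i) (ga i) (de i) => u v w; lia.
rewrite exchange_big /= big_seq [RHS]big_seq; apply: eq_bigr => de; rewrite mem_Box => hd.
rewrite smulE (sum_sub_box _ hd) big_distrl [RHS]big_mkcond /=; apply: eq_bigr => ga _.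
by case: ifP => // _; rewrite mulrA.
Qed.


Definition sadd a b : series R n := fun al => a al + b al.
Definition ssub a b : series R n := fun al => a al - b al.
Definition szero : series R n := fun _ => 0.

Lemma smulBr a b c : smul a (ssub b c) = ssub (smul a b) (smul a c).
Proof.
apply: functional_extensionality => g; rewrite /ssub !smulE -sumrB.
by apply: eq_bigr => x _; rewrite mulrBr.
Qed.

Lemma smulDr a b c : smul a (sadd b c) = sadd (smul a b) (smul a c).
Proof.
apply: functional_extensionality => g; rewrite /sadd !smulE -big_split.
by apply: eq_bigr => x _; rewrite mulrDr.
Qed.

Lemma smul0r a : smul a szero = szero.
Proof.
apply: functional_extensionality => g; rewrite /szero smulE big1 // => x _.
by rewrite mulr0.
Qed.

Lemma smul_sumr a (J : {set 'I_n}) (k : 'I_n -> R[i]) (B : 'I_n -> series R n) :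
  smul a (fun al => \sum_(j in J) k j * B j al) =
  fun al => \sum_(j in J) k j * smul a (B j) al.
Proof.
apply: functional_extensionality => g; rewrite smulE.
under eq_bigr do rewrite mulr_sumr.
rewrite exchange_big /=; apply: eq_bigr => j _.
rewrite smulE mulr_sumr; apply: eq_bigr => x _; by rewrite mulrCA.
Qed.

End Ser.

Section Der.
Variables (R : realType) (n : nat).
Implicit Types (a b c : series R n) (g al be ga de x y z : midx n).

Definition down (j : 'I_n) al : midx n := [ffun i => if i == j then (al i).-1 else al i].
Definition up (j : 'I_n) al : midx n := [ffun i => if i == j then (al i).+1 else al i].

Lemma sderivE j a al : sderiv j a al = (al j).+1%:R * a (up j al).
Proof. by []. Qed.

Lemma upE j al i : up j al i = if i == j then (al i).+1 else al i.
Proof. by rewrite ffunE. Qed.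

Lemma sderiv_smul j a b :
  sderiv j (smul a b) = sadd (smul (sderiv j a) b) (smul a (sderiv j b)).
Proof.
apply: functional_extensionality => g; rewrite /sadd sderivE !smulE.
set G := up j g.
have GjE : G j = (g j).+1 by rewrite /G upE eqxx.
have T1 : \sum_(x <- Box g) sderiv j a x * b (msub g x) =
          \sum_(x <- Box G) (x j)%:R * (a x * b (msub G x)).
  rewrite [RHS](bigID (fun x : midx n => (0 < x j)%N)) /=.
  rewrite [X in _ = _ + X]big1 ?addr0; last first.
    by move=> x; rewrite -eqn0Ngt => /eqP ->; rewrite mul0r.
  have memE : [seq x : midx n <- Box G | (0 < x j)%N] =i map (up j) (Box g).
    move=> y; rewrite mem_filter mem_Box; apply/andP/mapP => [[h1 /mleP h2]|[x]].
      exists (down j y).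
        rewrite mem_Box; apply/mleP => i; have := h2 i; rewrite /G !ffunE.
        case: (i == j) => //; move: (y i) (g i) => u v; lia.
      apply/ffunP => i; rewrite !ffunE; case: eqP => [->|//].
      by rewrite prednK.
    rewrite mem_Box => /mleP hx ->; split; first by rewrite upE eqxx.
    apply/mleP => i; rewrite /G !upE; case: (i == j) => //; exact: hx.
  rewrite -[RHS]big_filter [RHS](sum_mem _ _ _ memE); first last.
  - rewrite map_inj_uniq ?uniq_Box // => x y /ffunP E; apply/ffunP => i.
    have := E i; rewrite !upE; case: (i == j) => //; case=> //.
  - exact/filter_uniq/uniq_Box.
  rewrite big_map big_seq [RHS]big_seq; apply: eq_bigr => x; rewrite mem_Box => /mleP hx.
  rewrite sderivE upE eqxx -mulrA; congr (_ * (_ * b _)).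
  apply/ffunP => i; rewrite /G !ffunE; case: (i == j) => //.
have T2 : \sum_(x <- Box g) a x * sderiv j b (msub g x) =
          \sum_(x <- Box G) (G j - x j)%:R * (a x * b (msub G x)).
  rewrite [RHS](bigID (fun x : midx n => (x j < G j)%N)) /=.
  rewrite [X in _ = _ + X]big1 ?addr0; last first.
    by move=> x; rewrite -leqNgt -subn_eq0 => /eqP ->; rewrite mul0r.
  rewrite -[RHS]big_filter [RHS](sum_box (g := g)); first last.
  - move=> x; rewrite mem_filter mem_Box; apply/andP/mleP => [[h1 /mleP h2] i|h].
      have := h2 i; rewrite /G upE; case: eqP => [->|//].
      by move: h1; rewrite GjE ltnS.
    split; first by rewrite GjE ltnS.
    apply/mleP => i; rewrite /G upE; case: (i == j); [exact: leqW (h i)|exact: h].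
  - exact/filter_uniq/uniq_Box.
  rewrite big_seq [RHS]big_seq; apply: eq_bigr => x; rewrite mem_Box => /mleP hx.
  rewrite sderivE mulrCA; congr (_ * (_ * b _)).
    by congr (_%:R); rewrite ffunE GjE; have := hx j; move: (x j) (g j) => u v; lia.
  apply/ffunP => i; rewrite /G !ffunE; case: (i == j) => //.
  by have := hx i; move: (x i) (g i) => u v; lia.
rewrite T1 T2 -big_split /= mulr_sumr big_seq [RHS]big_seq.
apply: eq_bigr => x; rewrite mem_Box => /mleP hx.
rewrite -mulrDl -natrD; congr (_%:R * _).
by have := hx j; rewrite GjE; move: (x j) (g j) => u v; lia.
Qed.

End Der.


Lemma ex_min (P : nat -> Prop) : (exists k, P k) ->
  exists k, P k /\ forall j, P j -> (k <= j)%N.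
Proof.
move=> [k Pk]; suff H : forall m k, (k <= m)%N -> P k ->
  exists k, P k /\ forall j, P j -> (k <= j)%N by exact: (H k k).
clear Pk; elim=> [|m IH] {}k hk Pk.
  exists k; split => // j _; by move: hk; rewrite leqn0 => /eqP ->.
case: (classic (exists j, (j < k)%N /\ P j)) => [[j [hj Pj]]|H].
  by apply: (IH j) => //; rewrite -ltnS; exact: leq_trans hj hk.
exists k; split => // j Pj; rewrite leqNgt; apply/negP => hj; apply: H; by exists j.
Qed.

Lemma digits_inj B m (u v : nat -> nat) : (0 < B)%N ->
  (forall i, (i < m)%N -> (u i < B)%N) -> (forall i, (i < m)%N -> (v i < B)%N) ->
  (\sum_(i < m) u i * B ^ i = \sum_(i < m) v i * B ^ i)%N ->
  forall i, (i < m)%N -> u i = v i.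
Proof.
move=> B0; elim: m u v => [//|m IH] u v hu hv.
rewrite !big_ord_recl /= !expn0 !muln1.
have sh : forall w : nat -> nat, (\sum_(i < m) w (bump 0 i) * B ^ bump 0 i =
    (\sum_(i < m) w i.+1 * B ^ i) * B)%N.
  by move=> w; rewrite big_distrl /=; apply: eq_bigr => i _; rewrite expnS mulnCA mulnC.
rewrite !sh => E.
have e0 : u 0%N = v 0%N.
  have := congr1 (fun t => t %% B)%N E; rewrite /= !(addnC (u 0%N)) !(addnC (v 0%N)).
  by rewrite !modnMDl !modn_small ?hu ?hv.
have e1 : (\sum_(i < m) u i.+1 * B ^ i = \sum_(i < m) v i.+1 * B ^ i)%N.
  by move: E; rewrite e0 => /addnI /eqP; rewrite eqn_pmul2r // => /eqP.
case=> [_|i hi]; first exact: e0.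
apply: (IH (fun k => u k.+1) (fun k => v k.+1)) => // k hk.
  exact: hu.
exact: hv.
Qed.

Section Dom.
Variables (R : realType) (n : nat).
Implicit Types (a b c : series R n) (g al be ga de x y z : midx n).

Definition key (B : nat) x : nat := (\sum_(i < n) x i * B ^ i)%N.

Lemma key_add B x y : key B (madd x y) = (key B x + key B y)%N.
Proof. by rewrite /key -big_split; apply: eq_bigr => i _; rewrite ffunE mulnDl. Qed.

Lemma mdeg_add x y : mdeg (madd x y) = (mdeg x + mdeg y)%N.
Proof. by rewrite /mdeg -big_split; apply: eq_bigr => i _; rewrite ffunE. Qed.

Lemma madd_msub g x : mle x g -> madd x (msub g x) = g.
Proof. move/mleP=> h; apply/ffunP => i; rewrite !ffunE; have := h i; move: (x i) (g i) => u v; lia. Qed.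

Lemma key_inj B x y : (forall i, x i < B)%N -> (forall i, y i < B)%N ->
  key B x = key B y -> x = y.
Proof.
move=> hx hy E.
pose u k := odflt 0%N (omap x (insub k)); pose v k := odflt 0%N (omap y (insub k)).
have uE : forall i : 'I_n, u i = x i by move=> i; rewrite /u valK.
have vE : forall i : 'I_n, v i = y i by move=> i; rewrite /v valK.
apply/ffunP => i.
have B0 : (0 < B)%N by have := hx i; case: (B).
rewrite -uE -vE; apply: (@digits_inj B n) => //.
- by move=> k hk; rewrite /u insubT /=.
- by move=> k hk; rewrite /v insubT /=.
rewrite (eq_bigr (fun i : 'I_n => x i * B ^ i)%N); last by move=> k _; rewrite uE.
by rewrite [RHS](eq_bigr (fun i : 'I_n => y i * B ^ i)%N) // => k _; rewrite vE.
Qed.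


Lemma min_deg a : nonzero_series a -> exists D, (exists x, a x != 0 /\ mdeg x = D) /\
  forall x, a x != 0 -> (D <= mdeg x)%N.
Proof.
move=> [x0 h0]; have [D [PD HD]] := ex_min (P := fun k => exists x, a x != 0 /\ mdeg x = k)
  (ex_intro _ _ (ex_intro _ x0 (conj h0 erefl))).
exists D; split => // x hx; apply: HD; by exists x.
Qed.

Lemma min_key a D B : (exists x, a x != 0 /\ mdeg x = D) -> exists al, [/\ a al != 0, mdeg al = D &
  forall x, a x != 0 -> mdeg x = D -> (key B al <= key B x)%N].
Proof.
move=> [x0 [h0 e0]].
have [k [[al [h1 [h2 h3]]] Hk]] := ex_min (P := fun k => exists x, a x != 0 /\ mdeg x = D /\ key B x = k)
  (ex_intro _ _ (ex_intro _ x0 (conj h0 (conj e0 erefl)))).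
exists al; split => // x hx ex; rewrite h3; apply: Hk; by exists x.
Qed.

Lemma smul_nonzero a b : nonzero_series a -> nonzero_series b -> nonzero_series (smul a b).
Proof.
move=> /min_deg [Da [PDa HDa]] /min_deg [Db [PDb HDb]].
set B := (Da + Db).+1.
have [al [ha ea Ka]] := min_key B PDa.
have [be [hb eb Kb]] := min_key B PDb.
exists (madd al be); rewrite smulE.
have alin : al \in Box (madd al be).
  by rewrite mem_Box; apply/mleP => i; rewrite ffunE leq_addr.
have mE : msub (madd al be) al = be.
  by apply/ffunP => i; rewrite !ffunE; move: (al i) (be i) => u v; lia.
rewrite (bigD1_seq al alin (uniq_Box _)) /= big1_seq ?addr0 ?mE ?mulf_neq0 //.
move=> x /andP[hxa]; rewrite mem_Box => hx.
case: (eqVneq (a x) 0) => [->|ax]; first by rewrite mul0r.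
case: (eqVneq (b (msub (madd al be) x)) 0) => [->|bx]; first by rewrite mulr0.
exfalso; move/negP: hxa; apply.
have d1 := HDa _ ax; have d2 := HDb _ bx.
have dE := mdeg_add x (msub (madd al be) x); rewrite madd_msub // mdeg_add ea eb in dE.
have ex : mdeg x = Da by lia.
have ey : mdeg (msub (madd al be) x) = Db by lia.
have k1 := Ka _ ax ex; have k2 := Kb _ bx ey.
have kE := key_add B x (msub (madd al be) x); rewrite madd_msub // key_add in kE.
apply/eqP; apply: key_inj (_ : key B x = key B al).
- move=> i; apply: leq_ltn_trans (le_mdeg x i) _; rewrite ex /B; lia.
- move=> i; apply: leq_ltn_trans (le_mdeg al i) _; rewrite ea /B; lia.
lia.
Qed.

End Dom.

Section Alg.
Variables (R : realType) (n : nat).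
Implicit Types (a b c f g x y : series R n) (al be : midx n).

Lemma smul_cancel g x y : nonzero_series g -> smul g x = smul g y -> x = y.
Proof.
move=> gnz E; apply: functional_extensionality => al.
apply/eqP; rewrite -subr_eq0; apply/negPn/negP => h.
have [be hbe] := smul_nonzero gnz (ex_intro (fun al => ssub x y al != 0) al h).
by move: hbe; rewrite smulBr E /ssub subrr eqxx.
Qed.

Lemma smulCA a b c : smul a (smul b c) = smul b (smul a c).
Proof. by rewrite smulA (smulC a b) -smulA. Qed.

Lemma lin4 (K : comNzRingType) (u v s t : K) : u + v = s + t -> v - s = t - u.
Proof. move=> h; have -> : v = s + t - u by rewrite -h; ring. ring. Qed.

Lemma step1 f g j (et th : series R n) : smul f et = smul g th ->
  smul f (ssub (smul g (sderiv j et)) (smul (sderiv j g) et)) =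
  smul g (ssub (smul g (sderiv j th)) (smul (sderiv j f) et)).
Proof.
move=> E.
have L : forall al, smul (sderiv j f) et al + smul f (sderiv j et) al =
                    smul (sderiv j g) th al + smul g (sderiv j th) al.
  by move=> al; have := congr1 (fun F => F al) (congr1 (sderiv j) E); rewrite !sderiv_smul.
rewrite smulBr smulCA (smulCA f (sderiv j g)) E (smulCA _ g) -smulBr.
congr (smul g _); apply: functional_extensionality => al; rewrite /ssub.
exact: lin4.
Qed.

Lemma step2 f g (eta th xi : cform R n) (J : {set 'I_n}) :
  nonzero_series g ->
  (forall K, smul f (eta K) = smul g (th K)) ->
  smul f (fun al => smul g (dform eta J) al - dwedge g eta J al) = smul (smul g g) (xi J) ->
  (fun al => \sum_(j in J) wsign R J j *
     ssub (smul f (sderiv j (th (J :\ j)))) (smul (sderiv j f) (th (J :\ j))) al)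
  = smul f (xi J).
Proof.
move=> gnz A B.
have S1 : smul g (dform eta J) = fun al => \sum_(j in J) wsign R J j *
    smul g (sderiv j (eta (J :\ j))) al :=
  smul_sumr g J (wsign R J) (fun j => sderiv j (eta (J :\ j))).
have I1 : (fun al => smul g (dform eta J) al - dwedge g eta J al) =
  (fun al => \sum_(j in J) wsign R J j * ssub (smul g (sderiv j (eta (J :\ j))))
                 (smul (sderiv j g) (eta (J :\ j))) al).
  apply: functional_extensionality => al; rewrite S1 /dwedge -sumrB.
  by apply: eq_bigr => j _; rewrite /ssub mulrBr.
rewrite I1 in B.
have e1 := smul_sumr g J (wsign R J) (fun j => ssub (smul g (sderiv j (th (J :\ j))))
                 (smul (sderiv j f) (eta (J :\ j)))).
have e2 := smul_sumr f J (wsign R J) (fun j => ssub (smul g (sderiv j (eta (J :\ j))))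
                 (smul (sderiv j g) (eta (J :\ j)))).
simpl in e1, e2.
have E1 : (fun al => \sum_(j in J) wsign R J j * ssub (smul g (sderiv j (th (J :\ j))))
                 (smul (sderiv j f) (eta (J :\ j))) al) = smul g (xi J).
  apply: (smul_cancel gnz); rewrite e1 smulA -B e2.
  apply: functional_extensionality => al; apply: eq_bigr => j _.
  by rewrite (step1 j (A (J :\ j))).
have e3 := smul_sumr f J (wsign R J) (fun j => ssub (smul g (sderiv j (th (J :\ j))))
                 (smul (sderiv j f) (eta (J :\ j)))).
have e4 := smul_sumr g J (wsign R J) (fun j => ssub (smul f (sderiv j (th (J :\ j))))
                 (smul (sderiv j f) (th (J :\ j)))).
simpl in e3, e4.
apply: (smul_cancel gnz); rewrite e4 smulCA -E1 e3.
apply: functional_extensionality => al; apply: eq_bigr => j _.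
rewrite !smulBr smulCA (smulCA f (sderiv j f)) A (smulCA _ g).
by rewrite (smulCA (sderiv j f) g).
Qed.

End Alg.

Section Wt.
Variables (R : realType) (n : nat) (w : 'I_n -> R).
Implicit Types (a b c : series R n) (al be x y : midx n).

Lemma smul_exists a b al : smul a b al != 0 ->
  exists x, [/\ mle x al, a x != 0 & b (msub al x) != 0].
Proof.
move=> h; apply: NNPP => H; move/eqP: h; apply; rewrite smulE big1_seq // => x.
rewrite mem_Box => /andP[_ hx].
case: (eqVneq (a x) 0) => [->|ax]; first by rewrite mul0r.
case: (eqVneq (b (msub al x)) 0) => [->|bx]; first by rewrite mulr0.
by exfalso; apply: H; exists x; split.
Qed.

Lemma mwt_add x y : mwt w (madd x y) = mwt w x + mwt w y.
Proof. by rewrite /mwt -big_split; apply: eq_bigr => i _; rewrite ffunE natrD mulrDl. Qed.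

Lemma mwt_split x al : mle x al -> mwt w al = mwt w x + mwt w (msub al x).
Proof. by move=> h; rewrite -mwt_add madd_msub. Qed.

Lemma mwt_up i x : mwt w (up i x) = mwt w x + w i.
Proof.
have -> : up i x = madd x [ffun k => nat_of_bool (k == i)].
  by apply/ffunP => k; rewrite !ffunE; case: (k == i) => //=; rewrite ?addn1 ?addn0.
rewrite mwt_add; congr (_ + _); rewrite /mwt (bigD1 i) //= ffunE eqxx mul1r big1 ?addr0 //.
by move=> k /negbTE hk; rewrite ffunE hk mul0r.
Qed.

Lemma mwt_ge0 x : (forall i, 0 <= w i) -> 0 <= mwt w x.
Proof. by move=> h; apply: sumr_ge0 => i _; apply: mulr_ge0 => //; exact: ler0n. Qed.

End Wt.

Unset Implicit Arguments.

Theorem mainTheorem2 (R : realType) (n r : nat) (w : 'I_n -> R)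
    (f : series R n) (d : R) :
  (1 <= r <= n)%N ->
  (forall i : 'I_n, (i < r)%N -> 0 < w i) ->
  (forall i : 'I_n, (r <= i)%N -> w i = 0) ->
  holo f -> poly_first r f -> nonzero_series f ->
  quasihom w f d -> 0 < d ->
  forall (p : nat) (eta : cform R n) (g : series R n) (th : cform R n) (e : R),
    (0 < p)%N ->
    holo_form p eta -> holo g -> nonzero_series g -> nonzero_form eta ->
    logarithmic f p eta g ->
    holo_form p th -> fmul f eta = fmul g th -> quasihom_form w th e ->
    - d < e - d.
Proof.
move=> _ wpos wzero _ _ fnz qf d0 p eta g th e _ _ _ gnz etanz [_ [xi [_ Hxi]]] _ Hfe qth.
suff : 0 < e by move=> ?; lra.
have wge0 : forall i, 0 <= w i.
  by move=> i; case: (ltnP i r) => h; [exact: ltW (wpos _ h)|rewrite wzero].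
have A : forall K, smul f (eta K) = smul g (th K) := fun K => congr1 (fun F => F K) Hfe.
have [I [al0 hal0]] : exists I al, th I al != 0.
  move: etanz => [I0 [a0 h0]].
  have [be hbe] := smul_nonzero fnz (ex_intro _ a0 h0 : nonzero_series (eta I0)).
  rewrite A in hbe; apply: NNPP => H; move: hbe.
  suff -> : th I0 = @szero R n by rewrite smul0r /szero eqxx.
  apply: functional_extensionality => al; apply/eqP/negPn/negP => h; apply: H.
  by exists I0, al.
have e_ge0 : 0 <= e.
  rewrite -(qth _ _ hal0); apply: addr_ge0; first exact: mwt_ge0.
  by apply: sumr_ge0 => k _.
rewrite lt0r e_ge0 andbT; apply/negP => /eqP e0; subst e.
have thK : forall K al, th K al != 0 -> mwt w al = 0 /\ forall k, k \in K -> w k = 0.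
  move=> K al h; have := qth _ _ h => E.
  have m0 := mwt_ge0 al wge0.
  have s0 : 0 <= \sum_(k in K) w k by apply: sumr_ge0 => k _.
  have m00 : mwt w al = 0 by lra.
  split => //; have s00 : \sum_(k in K) w k = 0 by lra.
  by move=> k hk; apply: (psumr_eq0P _ s00) => // j _.
have al_i0 : forall al (i : 'I_n), mwt w al = 0 -> (i < r)%N -> al i = 0%N.
  move=> al i h hi.
  have hF : forall k : 'I_n, true -> 0 <= (al k)%:R * w k.
    by move=> k _; apply: mulr_ge0 (wge0 k); exact: ler0n.
  rewrite /mwt in h; have := psumr_eq0P hF h; move=> /(_ i isT) /eqP; rewrite mulf_eq0 pnatr_eq0.
  case/orP => [/eqP -> //|/eqP hw]; by have := wpos _ hi; rewrite hw ltxx.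
have [i [ir fi]] : exists i : 'I_n, (i < r)%N /\ nonzero_series (sderiv i f).
  move: fnz => [be hbe]; have mb := qf _ hbe.
  have [k hk] : exists k, (be k)%:R * w k != 0.
    apply: NNPP => H; have : mwt w be = 0.
      rewrite /mwt big1 // => k _; apply/eqP/negPn/negP => hk; apply: H; by exists k.
    lra.
  rewrite mulf_eq0 negb_or pnatr_eq0 in hk; case/andP: hk => hbk hwk.
  have kr : (k < r)%N.
    by rewrite ltnNge; apply/negP => h; move: hwk; rewrite wzero ?eqxx.
  exists k; split => //; exists (down k be); rewrite sderivE mulf_neq0 //.
    by rewrite pnatr_eq0.
  suff -> : up k (down k be) = be by [].
  apply/ffunP => j; rewrite !ffunE; case: eqP => [->|//]; rewrite ?eqxx prednK //.
  by rewrite lt0n.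
have wi := wpos i ir.
have iI : i \notin I.
  by apply/negP => h; have := (thK _ _ hal0).2 _ h; lra.
set J := i |: I.
have E := step2 (xi := xi) (J := J) gnz A (congr1 (fun F => F J) Hxi).
have thz : forall K : {set 'I_n}, i \in K -> th K = @szero R n.
  move=> K hK; apply: functional_extensionality => al; apply/eqP/negPn/negP => h.
  by have := (thK _ _ h).2 _ hK; lra.
have dthI : sderiv i (th I) = @szero R n.
  apply: functional_extensionality => al; rewrite sderivE /szero.
  case: (eqVneq (th I (up i al)) 0) => [->|h]; first by rewrite mulr0.
  by have := al_i0 _ _ (thK _ _ h).1 ir; rewrite upE eqxx.
have sdz : forall j, sderiv j (@szero R n) = @szero R n.
  by move=> j; apply: functional_extensionality => al; rewrite sderivE /szero mulr0.
have Ev : forall al, smul f (xi J) al = - wsign R J i * smul (sderiv i f) (th I) al.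
  move=> al; rewrite -E /= (bigD1 i) ?setU11 //= setU1K // dthI smul0r big1 ?addr0.
    by rewrite /ssub /szero sub0r mulrN mulNr.
  move=> j /andP[hj hji]; rewrite thz ?sdz ?smul0r /ssub /szero ?subr0 ?mulr0 //.
  by rewrite in_setD1 eq_sym hji setU11.
have [al hal] := smul_nonzero fi (ex_intro _ al0 hal0 : nonzero_series (th I)).
have hfx : smul f (xi J) al != 0.
  by rewrite Ev mulf_neq0 // oppr_eq0 /wsign expf_neq0 // oppr_eq0 oner_eq0.
have [x [hx h1 h2]] := smul_exists hal.
have [y [hy h3 h4]] := smul_exists hfx.
have wx : mwt w x = d - w i.
  move: h1; rewrite sderivE mulf_eq0 negb_or => /andP[_ h1].
  by have := qf _ h1; rewrite mwt_up => ?; lra.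
have wz : mwt w (msub al x) = 0 := (thK _ _ h2).1.
have wy : mwt w y = d := qf _ h3.
have := mwt_split w hx; have := mwt_split w hy; have := mwt_ge0 (msub al y) wge0.
lra.
Qed.
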